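(* Let $L$ be an $R_0$-algebra, $k\in[0,1)$, and $\mu:L\to[0,1]$ a fuzzy subset. The following are equivalent: (1) $\mu$ is an $(\in,\in\vee q_k)$-fuzzy fated filter of $L$; (2) for every $t\in(0,1]$, the set $[\mu]_t^k=\{x\in L\mid \mu(x)\ge t \text{ or } \mu(x)+t+k>1\}$ is either empty or a fated filter of $L$.
   Context: An $R_0$-algebra is a bounded distributive lattice $(L,\wedge,\vee,0,1)$ with an order-reversing involution $\neg$ and a binary operation $\to$ such that for all $x,y,z\in L$: $x\to y=\neg y\to\neg x$; $1\to x=x$; $(y\to z)\wedge((x\to y)\to(x\to z))=y\to z$; $x\to(y\to z)=y\to(x\to z)$; $x\to(y\vee z)=(x\to y)\vee(x\to z)$; $(x\to y)\vee((x\to y)\to(\neg x\vee y))=1$. A fated filter of $L$ is a nonempty subset $A\subseteq L$ with $1\in A$ such that for all $x,y\in L$ and $a\in A$, $a\to((x\to y)\to x)\in A$ implies $x\in A$. For $x\in L$, $t\in(0,1]$: $x_t\in\mu$ iff $\mu(x)\ge t$; $x_t\,q_k\,\mu$ iff $\mu(x)+t+k>1$; $x_t\in\vee q_k\,\mu$ iff $x_t\in\mu$ or $x_t\,q_k\,\mu$. $\mu$ is an $(\in,\in\vee q_k)$-fuzzy fated filter of $L$ if (i) for all $x\in L$, $t\in(0,1]$: $x_t\in\mu\Rightarrow 1_t\in\vee q_k\,\mu$; and (ii) for all $x,a,y\in L$, $t,s\in(0,1]$: if $(a\to((x\to y)\to x))_t\in\mu$ and $a_s\in\mu$ then $x_{\min\{t,s\}}\in\vee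 q_k\,\mu$. *)

(* Defs.v *)
From Stdlib Require Import Reals.
Open Scope R_scope.

Record R0_algebra := {
  car :> Type;
  meet : car -> car -> car;
  join : car -> car -> car;
  zero : car;
  one : car;
  neg : car -> car;
  imp : car -> car -> car;
  meetC : forall x y, meet x y = meet y x;
  joinC : forall x y, join x y = join y x;
  meetA : forall x y z, meet x (meet y z) = meet (meet x y) z;
  joinA : forall x y z, join x (join y z) = join (join x y) z;
  meet_join_absorb : forall x y, meet x (join x y) = x;
  join_meet_absorb : forall x y, join x (meet x y) = x;
  meet_joinDr : forall x y z, meet x (join y z) = join (meet x y) (meet x z);
  meet0 : forall x, meet zero x = zero;
  join1 : forall x, join one x = one;
  (* order-reversing involution; x <= y iff meet x y = x *)
  negK : forall x, neg (neg x) = x;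
  neg_antitone : forall x y, meet x y = x -> meet (neg y) (neg x) = neg y;
  R1 : forall x y, imp x y = imp (neg y) (neg x);
  R2 : forall x, imp one x = x;
  R3 : forall x y z, meet (imp y z) (imp (imp x y) (imp x z)) = imp y z;
  R4 : forall x y z, imp x (imp y z) = imp y (imp x z);
  R5 : forall x y z, imp x (join y z) = join (imp x y) (imp x z);
  R6 : forall x y, join (imp x y) (imp (imp x y) (join (neg x) y)) = one
}.

Arguments meet {_}. Arguments join {_}. Arguments zero {_}. Arguments one {_}.
Arguments neg {_}. Arguments imp {_}.

Definition fated_filter (L : R0_algebra) (A : L -> Prop) : Prop :=
  (exists z, A z) /\ A one /\
  forall x y a : L, A a -> A (imp a (imp (imp x y) x)) -> A x.

Definition fp_in (L : R0_algebra) (mu : L -> R) (x : L) (t : R) : Prop :=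
  mu x >= t.
Definition fp_q (L : R0_algebra) (k : R) (mu : L -> R) (x : L) (t : R) : Prop :=
  mu x + t + k > 1.
Definition fp_in_or_q (L : R0_algebra) (k : R) (mu : L -> R) (x : L) (t : R) : Prop :=
  fp_in L mu x t \/ fp_q L k mu x t.

Definition in_inq_fuzzy_fated_filter (L : R0_algebra) (k : R) (mu : L -> R) : Prop :=
  (forall (x : L) (t : R), 0 < t <= 1 ->
     fp_in L mu x t -> fp_in_or_q L k mu one t) /\
  (forall (x a y : L) (t s : R), 0 < t <= 1 -> 0 < s <= 1 ->
     fp_in L mu (imp a (imp (imp x y) x)) t -> fp_in L mu a s ->
     fp_in_or_q L k mu x (Rmin t s)).

Definition level_set (L : R0_algebra) (k : R) (mu : L -> R) (t : R) : L -> Prop :=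
  fun x => mu x >= t \/ mu x + t + k > 1.

(* Main.v *)
Require Import Defs.
From Stdlib Require Import Reals Lra Classical.
Open Scope R_scope.

Lemma minchar (L : R0_algebra) (k : R) (mu : L -> R)
  (hk : 0 <= k < 1) (hmu : forall x : L, 0 <= mu x <= 1)
  (H : in_inq_fuzzy_fated_filter L k mu) (x a y : L) :
  mu x >= mu a \/ mu x >= mu (imp a (imp (imp x y) x)) \/ mu x >= (1 - k) / 2.
Proof.
  destruct H as [_ H2].
  set (b := @imp L a (@imp L (@imp L x y) x)).
  apply NNPP; intro Hn.
  assert (h1 : mu x < mu a) by (apply Rnot_ge_lt; tauto).
  assert (h2 : mu x < mu b) by (apply Rnot_ge_lt; tauto).
  assert (h3 : mu x < (1 - k) / 2) by (apply Rnot_ge_lt; tauto).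
  set (s := Rmin (Rmin (mu a) (mu b)) ((1 - k) / 2)).
  assert (sa : s <= mu a) by (eapply Rle_trans; [apply Rmin_l| apply Rmin_l]).
  assert (sb : s <= mu b) by (eapply Rle_trans; [apply Rmin_l| apply Rmin_r]).
  assert (sr : s <= (1 - k) / 2) by apply Rmin_r.
  assert (xs : mu x < s) by (apply Rmin_glb_lt; [apply Rmin_glb_lt|]; assumption).
  pose proof (hmu x). pose proof (hmu a).
  assert (Hs : 0 < s <= 1) by lra.
  specialize (H2 x a y s s Hs Hs (Rle_ge _ _ sb) (Rle_ge _ _ sa)).
  unfold fp_in, fp_in_or_q, fp_q in H2.
  rewrite Rmin_left in H2; [|lra].
  clearbody s. destruct H2 as [c|c]; unfold fp_in, fp_q in c; lra.
Qed.

Theorem theorem3p24 (L : R0_algebra) (k : R) (mu : L -> R)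
  (hk : 0 <= k < 1) (hmu : forall x : L, 0 <= mu x <= 1) :
  in_inq_fuzzy_fated_filter L k mu <->
  (forall t : R, 0 < t <= 1 ->
     (forall x : L, ~ level_set L k mu t x) \/ fated_filter L (level_set L k mu t)).
Proof.
  split.
  - intros H t Ht.
    destruct (classic (exists z, level_set L k mu t z)) as [[z Hz]|Hn].
    2:{ left. intros x Hx. apply Hn. eauto. }
    right. split; [eauto|split].
    + destruct H as [H1 _]. unfold level_set in *.
      destruct Hz as [Hz|Hz].
      * specialize (H1 z t Ht Hz). unfold fp_in_or_q, fp_in, fp_q in H1. exact H1.
      * destruct (Rge_dec (mu z) t) as [g|g].
        { specialize (H1 z t Ht g). exact H1. }
        right. pose proof (hmu z). pose proof (hmu one).
        destruct (Req_dec (mu z) 0) as [e|e]; [lra|].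
        assert (Hz' : 0 < mu z <= 1) by lra.
        specialize (H1 z (mu z) Hz' (Rle_ge _ _ (Rle_refl _))).
        unfold fp_in_or_q, fp_in, fp_q in H1. lra.
    + intros x y a Ha Hb.
      pose proof (minchar L k mu hk hmu H x a y) as M.
      unfold level_set in *. lra.
  - intros H. split.
    + intros x t Ht Hx.
      destruct (H t Ht) as [E|[_ [F _]]].
      * exfalso. apply (E x). left. exact Hx.
      * exact F.
    + intros x a y t s Ht Hs Hb Ha.
      assert (Hm : 0 < Rmin t s <= 1).
      { unfold Rmin; destruct (Rle_dec t s); lra. }
      assert (mt : Rmin t s <= t) by apply Rmin_l.
      assert (ms : Rmin t s <= s) by apply Rmin_r.
      unfold fp_in in *.
      destruct (H _ Hm) as [E|[_ [_ F]]].
      * exfalso. apply (E a). left. lra.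
      * apply (F x y a); unfold level_set; left; lra.
Qed.
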